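(* Suppose $m=1$. Then for every $\ell\in\{1,\dots,D\}$ the family $(\beta_{Q,\ell})_{Q\in\mathcal Q}$ is ultimately constant.
   Context: Let $(K,v)$ be a valued field, $\Gamma$ the divisible hull of $vK$, embedded in a divisible ordered abelian group $\Lambda$. Let $\nu\colon K[x]\to\Lambda\cup\{\infty\}$ be a valuation extending $v$ which is well-specified, i.e. it is not the case that simultaneously $\nu^{-1}(\infty)=0$, the value group of $\nu$ modulo $\Gamma$ is torsion, and the residue field of $\nu$ is algebraic over that of $v$. For $s\ge0$ let $\partial_s$ be the $s$-th Hasse–Schmidt derivative, defined by $f(x+y)=\sum_{s\ge0}(\partial_sf)y^s$. For nonconstant $f$ with $\nu(f)<\infty$ the level is $\epsilon_\nu(f)=\max\{(\nu(f)-\nu(\partial_sf))/s: s\ge1\}$; $\epsilon_\nu(a)=-\infty$ for $a\in K$. A monic $Q\in K[x]$ is a key polynomial for $\nu$ if $\epsilon_\nu(f)<\epsilon_\nu(Q)$ whenever $\deg f<\deg Q$. For monic $Q$, each $f$ has a unique $Q$-expansion $f=\sum_{i\ge0}f_{Q,i}Q^i$ with $\deg f_{Q,i}<\deg Q$; set $\nu_Q(f)=\min_i\nu(f_{Q,i}Q^i)$. Fix $m\ge1$ such that the set $\Psi_m$ of key polynomials of degree $m$ for $\nu$ is nonempty and has no element of maximal $\nu$-value. Let $\mathcal Q\subseteq\Psi_m$ be well-ordered by $Q<R\iff\nu(Q)<\nu(R)$ and cofinal in $\Psi_m$ for $\nu$-values. A family indexed by $\mathcal Q$ is ultimately constant if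 it is constant on a final segment of $\mathcal Q$. $f$ is $\mathcal Q$-stable if $\nu_Q(f)=\nu(f)$ for all $Q$ in a final segment of $\mathcal Q$, $\mathcal Q$-unstable otherwise. Assume unstable polynomials exist; limit key polynomials are the monic $\mathcal Q$-unstable polynomials of minimal degree, forming $\mathrm{KP}_\infty(\mathcal Q)$. Fix $F\in\mathrm{KP}_\infty(\mathcal Q)$, $D=\lfloor\deg F/m\rfloor$, $F=\sum_{\ell=0}^DF_{Q,\ell}Q^\ell$ its $Q$-expansion and $\beta_{Q,\ell}=\nu(F_{Q,\ell})\in\Lambda\cup\{\infty\}$. *)

(* Defs.v *)
From HB Require Import structures.
From mathcomp Require Import all_boot all_order all_algebra.
Set Implicit Arguments. Unset Strict Implicit. Unset Printing Implicit Defensive.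
Import Order.TTheory GRing.Theory Num.Theory.
Local Open Scope ring_scope.

(* The value group Λ : a divisible ordered abelian group.  A divisible      *)
(* (torsion-free) abelian group is the same as a Q-vector space, so Λ is    *)
(* given as an [lmodType rat] together with a total order [le] compatible  *)
(* with addition.                                                          *)
Record ordered_group (L : zmodType) (le : rel L) : Prop := {
  og_refl : reflexive le;
  og_anti : antisymmetric le;
  og_trans : transitive le;
  og_total : total le;
  og_add : forall x y z, le x y -> le (x + z) (y + z) }.

(* Λ ∪ {∞} is [option L], with [None] = ∞. *)
Section Ext.
Variables (L : zmodType) (le : rel L).
Definition vle (a b : option L) : bool :=
  match a, b with
  | _, None => true
  | None, Some _ => false
  | Some x, Some y => le x y
  end.
Definition vlt (a b : option L) : bool := vle a b && ~~ vle b a.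
Definition vadd (a b : option L) : option L :=
  match a, b with Some x, Some y => Some (x + y) | _, _ => None end.
Definition vmin (a b : option L) : option L := if vle a b then a else b.
End Ext.

Record field_valuation (K : fieldType) (L : zmodType) (le : rel L)
    (v : K -> option L) : Prop := {
  fv_inf : forall a, v a = None <-> a = 0;
  fv_mul : forall a b, v (a * b) = vadd (v a) (v b);
  fv_add : forall a b, vle le (vmin le (v a) (v b)) (v (a + b)) }.

(* A valuation nu : K[x] -> Λ ∪ {∞} (its support nu^{-1}(∞) may be a      *)
(* nonzero prime ideal). *)
Record poly_valuation (K : fieldType) (L : zmodType) (le : rel L)
    (nu : {poly K} -> option L) : Prop := {
  pv_zero : nu 0 = None;
  pv_one : nu 1 = Some 0;
  pv_mul : forall f g, nu (f * g) = vadd (nu f) (nu g);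
  pv_add : forall f g, vle le (vmin le (nu f) (nu g)) (nu (f + g)) }.

Section KeyPolys.
Variables (L : lmodType rat) (le : rel L) (K : fieldType).
Variables (v : K -> option L) (nu : {poly K} -> option L).

Definition Gamma (g : L) : Prop :=
  exists n : nat, (0 < n)%N /\ exists a : K, v a = Some (g *+ n).

(* The value group of nu (on K(x)) modulo Γ is torsion. *)
Definition value_group_torsion_mod_Gamma : Prop :=
  forall (f g : {poly K}) (a b : L), nu f = Some a -> nu g = Some b ->
    exists n : nat, (0 < n)%N /\ Gamma ((a - b) *+ n).

(* The residue field of nu (on K(x)) is algebraic over that of v: every     *)
(* residue class of f/g (nu f >= nu g) is a root of a polynomial over kv    *)
(* with nonzero (unit) leading coefficient, i.e. there are a_0..a_n in the  *)
(* valuation ring of v, a_n a unit, with nu(sum a_i (f/g)^i) > 0.           *)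
Definition residue_field_algebraic : Prop :=
  forall f g : {poly K}, g != 0 -> vle le (nu g) (nu f) ->
    exists (n : nat) (a : nat -> K),
      (forall i, (i <= n)%N -> vle le (Some 0) (v (a i))) /\
      v (a n) = Some 0 /\
      vlt le (nu (g ^+ n))
             (nu (\sum_(i < n.+1) a i *: (f ^+ i * g ^+ (n - i)))).

Definition well_specified : Prop :=
  ~ [/\ (forall f, nu f = None -> f = 0),
        value_group_torsion_mod_Gamma & residue_field_algebraic].

(* Hasse--Schmidt derivatives: f(x+y) = sum_s (hasse s f) y^s.  This is     *)
(* MathComp's [nderivn] (the n-th derivative divided by n!). *)
Definition hasse (s : nat) (f : {poly K}) : {poly K} := nderivn s f.

Inductive lvl := LMinf | LFin of L | LPinf.
Definition lvl_le (a b : lvl) : bool :=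
  match a, b with
  | LMinf, _ => true
  | _, LPinf => true
  | LFin x, LFin y => le x y
  | _, _ => false
  end.
Definition lvl_lt (a b : lvl) : bool := lvl_le a b && ~~ lvl_le b a.
Definition lvl_max (a b : lvl) : lvl := if lvl_le a b then b else a.

(* epsilon_nu(f) = max_{s >= 1} (nu f - nu (hasse s f)) / s ; terms with    *)
(* nu(hasse s f) = ∞ contribute -∞ (only s <= deg f can contribute);        *)
(* constants have level -∞; convention: +∞ if f nonconstant with nu f = ∞.  *)
Definition level (f : {poly K}) : lvl :=
  if (size f <= 1)%N then LMinf else
  match nu f with
  | None => LPinf
  | Some a =>
      \big[lvl_max/LMinf]_(1 <= s < size f)
        match nu (hasse s f) with
        | None => LMinf
        | Some b => LFin ((s%:R)^-1 *: (a - b))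
        end
  end.

Definition key_poly (Q : {poly K}) : Prop :=
  Q \is monic /\
  forall f : {poly K}, (size f < size Q)%N -> lvl_lt (level f) (level Q).

(* Q-expansion: f = sum_i expcoef Q f i * Q^i with deg (expcoef Q f i) < deg Q. *)
Definition expcoef (Q f : {poly K}) (i : nat) : {poly K} := (f %/ Q ^+ i) %% Q.

(* nu_Q(f) = min_i nu(f_{Q,i} Q^i) (the coefficients vanish for i >= size f). *)
Definition nuQ (Q f : {poly K}) : option L :=
  \big[vmin le/None]_(i < size f) nu (expcoef Q f i * Q ^+ i).

Definition Psi (m : nat) (Q : {poly K}) : Prop := key_poly Q /\ (size Q).-1 = m.

Definition well_ordered_by_value (Qset : {poly K} -> Prop) : Prop :=
  (forall Q R, Qset Q -> Qset R -> nu Q = nu R -> Q = R) /\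
  (forall S : {poly K} -> Prop, (forall Q, S Q -> Qset Q) -> (exists Q, S Q) ->
     exists Q0, S Q0 /\ forall Q, S Q -> vle le (nu Q0) (nu Q)).

Definition stable (Qset : {poly K} -> Prop) (f : {poly K}) : Prop :=
  exists Q0, Qset Q0 /\
    forall Q, Qset Q -> vle le (nu Q0) (nu Q) -> nuQ Q f = nu f.

Definition limit_key (Qset : {poly K} -> Prop) (F : {poly K}) : Prop :=
  [/\ F \is monic, ~ stable Qset F &
      forall g : {poly K}, g \is monic -> ~ stable Qset g -> (size F <= size g)%N].

End KeyPolys.

(* Main.v *)
From HB Require Import structures.
From mathcomp Require Import all_boot all_order all_algebra.
From mathcomp Require Import zify ring.
Set Implicit Arguments. Unset Strict Implicit. Unset Printing Implicit Defensive.
Import Order.TTheory GRing.Theory Num.Theory.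
Local Open Scope ring_scope.
Require Import Defs.
Section PolyFacts.
Variable K : fieldType.
Implicit Types (f g p : {poly K}) (a c : K).

Definition T a f i := (f \Po ('X + a%:P))`_i.

Lemma coef0_compXa a f : T a f 0 = f.[a].
Proof.
by rewrite /T -horner_coef0 horner_comp !hornerE.
Qed.

Lemma compXa_sub a : ('X - a%:P) \Po ('X + a%:P) = 'X.
Proof. by rewrite comp_polyB comp_polyX comp_polyC addrK. Qed.

Lemma T_succ a f i : T a f i.+1 = T a (f %/ ('X - a%:P)) i.
Proof.
rewrite /T {1}(divp_eq f ('X - a%:P)) modp_XsubC comp_polyD comp_polyM.
by rewrite compXa_sub comp_polyC coefD coefMX coefC /= addr0.
Qed.

Lemma expcoefE a f i :
  (f %/ ('X - a%:P) ^+ i) %% ('X - a%:P) = (T a f i)%:P.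
Proof.
elim: i f => [|i IH] f.
  by rewrite expr0 divp1 modp_XsubC coef0_compXa.
by rewrite exprS -divp_divl IH T_succ.
Qed.

Lemma ev_nderivn a f l : (f^`N(l)).[a] = T a f l.
Proof.
elim/poly_ind: f l => [|p c IH] l.
  by rewrite /T comp_poly0 coef0 nderivn_poly0 ?size_poly0 // horner0.
case: l => [|l].
  rewrite nderivn0 /T comp_polyD comp_polyM comp_polyX comp_polyC mulrDr coefD coefD.
  rewrite coefMX coefMC coefC /= !hornerE -/(T a p 0) -(IH 0%N) nderivn0 /=.
  by [] || rewrite add0r.
rewrite nderivnMXaddC /T comp_polyD comp_polyM comp_polyX comp_polyC mulrDr coefD coefD.
rewrite coefMX coefMC coefC /= !hornerE ?addr0 -/(T a p l) -/(T a p l.+1) -!IH.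
by rewrite mulrC.
Qed.

Lemma size_nderivn_lt f l : (0 < l)%N -> (0 < size f)%N -> (size (f^`N(l)) < size f)%N.
Proof.
move=> l0 s0.
have H : (size (f^`N(l)) <= size f - l)%N.
  apply/leq_sizeP=> j hj; rewrite coef_nderivn.
  have -> : f`_(l + j) = 0.
    by apply: (elimT (leq_sizeP _ _) (leqnn (size f))); move: hj l0; clear; lia.
  by rewrite mul0rn.
apply: leq_ltn_trans H _; lia.
Qed.

Lemma monic2E (Q : {poly K}) : Q \is monic -> size Q = 2%N -> Q = 'X - (- Q`_0)%:P.
Proof.
move=> /monicP mQ sQ; apply/polyP=> j.
rewrite polyCN opprK coefD coefX coefC.
case: j => [|[|j]] /=.
- by rewrite add0r.
- by rewrite addr0 -mQ /lead_coef sQ.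
- rewrite addr0; apply/(leq_sizeP _ _ (leqnn (size Q))); rewrite sQ; lia.
Qed.

End PolyFacts.
Section OG.
Variables (L : lmodType rat) (le : rel L).
Hypothesis Hog : ordered_group le.

Lemma le_refl' x : le x x. Proof. exact: (og_refl Hog x). Qed.
Lemma le_trans' x y z : le x y -> le y z -> le x z.
Proof. by move=> h1 h2; apply: (og_trans Hog) h2. Qed.
Lemma le_addr x y z : le x y -> le (x + z) (y + z). Proof. exact: og_add. Qed.
Lemma le_addl x y z : le x y -> le (z + x) (z + y).
Proof. by move=> h; rewrite ![z + _]addrC; apply: le_addr. Qed.
Lemma le_add2 a b c d : le a b -> le c d -> le (a + c) (b + d).
Proof. move=> h1 h2; apply: le_trans' (le_addr c h1) (le_addl b h2). Qed.
Lemma le_addr_cancel x y z : le (x + z) (y + z) -> le x y.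
Proof. by move=> /(le_addr (- z)); rewrite !addrK. Qed.
Lemma le_natmul x y i : le x y -> le (x *+ i) (y *+ i).
Proof.
move=> h; elim: i => [|i IH]; first by rewrite !mulr0n; apply: le_refl'.
by rewrite !mulrS le_add2.
Qed.
Lemma natmul_inj (x y : L) i : (0 < i)%N -> x *+ i = y *+ i -> x = y.
Proof.
move=> i0 /eqP; rewrite -subr_eq0 -mulrnBl -scaler_nat scaler_eq0 pnatr_eq0.
have -> : (i == 0%N) = false by move: i0; clear; lia.
by rewrite /= subr_eq0 => /eqP.
Qed.

Lemma vle_refl a : vle le a a. Proof. by case: a => //= x; exact: le_refl'. Qed.
Lemma vle_trans a b c : vle le a b -> vle le b c -> vle le a c.
Proof. by case: a; case: b; case: c => //= *; apply: le_trans'; eauto. Qed.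
Lemma vle_total a b : vle le a b || vle le b a.
Proof. by case: a; case: b => //= x y; exact: og_total. Qed.
Lemma vmin_l a b : vle le (vmin le a b) a.
Proof.
rewrite /vmin; case: ifP => h; first exact: vle_refl.
by move: (vle_total a b); rewrite h.
Qed.
Lemma vmin_r a b : vle le (vmin le a b) b.
Proof. by rewrite /vmin; case: ifP => h //; exact: vle_refl. Qed.
Lemma vmin_cases a b : vmin le a b = a \/ vmin le a b = b.
Proof. by rewrite /vmin; case: ifP; auto. Qed.

Lemma bigmin_le_nat n (F : nat -> option L) : forall k m j, (n - m <= k)%N -> (m <= j < n)%N ->
  vle le (\big[vmin le/None]_(m <= i < n) F i) (F j).
Proof.
elim=> [|k IH] m j hk hj; first by exfalso; move: hk hj; clear; lia.
rewrite big_ltn; last by move: hj; clear; lia.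
case: (ltngtP m j) hj => [h|h|<-] hj; last exact: vmin_l.
- apply: vle_trans (vmin_r _ _) (IH _ _ _ _); move: hk hj h; clear; lia.
- by exfalso; move: hj h; clear; lia.
Qed.

Lemma bigmin_le n (F : nat -> option L) j : (j < n)%N ->
  vle le (\big[vmin le/None]_(i < n) F i) (F j).
Proof.
move=> hj; rewrite -(big_mkord xpredT).
by apply: (@bigmin_le_nat n F n 0 j); move: hj; clear; lia.
Qed.

Lemma bigmin_ind (P : option L -> Prop) n (F : nat -> option L) :
  P None -> (forall i, (i < n)%N -> P (F i)) -> P (\big[vmin le/None]_(i < n) F i).
Proof.
move=> h0 hF; apply: (big_ind P) => //.
  by move=> x y hx hy; case: (vmin_cases x y) => ->.
by move=> i _; apply: hF.
Qed.

End OG.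

Section Val.
Variables (L : lmodType rat) (le : rel L) (K : fieldType).
Variables (v : K -> option L) (nu : {poly K} -> option L).
Hypotheses (Hog : ordered_group le) (Hv : field_valuation le v)
  (Hnu : poly_valuation le nu) (HnuC : forall a : K, nu a%:P = v a).
Implicit Types (f : {poly K}) (a : K).

Lemma v0 : v 0 = None. Proof. by apply/(fv_inf Hv). Qed.

Lemma nu_neg1 : nu (-1) = Some 0.
Proof.
have h := pv_mul Hnu (-1) (-1); rewrite mulrNN mulr1 (pv_one Hnu) in h.
case E: (nu (-1)) h => [x|] //= [h]; congr Some.
apply: (@natmul_inj _ x 0 2) => //; by rewrite mulr2n mul0rn.
Qed.

Lemma nu_opp f : nu (- f) = nu f.
Proof.
by rewrite -mulN1r (pv_mul Hnu) nu_neg1; case: (nu f) => //= x; rewrite add0r.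
Qed.

Lemma nu_exp Q g i : nu Q = Some g -> nu (Q ^+ i) = Some (g *+ i).
Proof.
move=> hQ; elim: i => [|i IH]; first by rewrite expr0 (pv_one Hnu) mulr0n.
by rewrite exprS (pv_mul Hnu) hQ IH /= mulrS.
Qed.

Definition good (b g : L) (x : K) (i : nat) :=
  forall r, v x = Some r -> le b (r + g *+ i).

Lemma good0 b g i : good b g 0 i.
Proof. by move=> r; rewrite v0. Qed.

Lemma good_add b g x y i : good b g x i -> good b g y i -> good b g (x + y) i.
Proof.
move=> hx hy r hr; have := fv_add Hv x y; rewrite hr.
case: (vmin_cases le (v x) (v y)) => ->.
  case E: (v x) => [s|] //= hs.
  exact: (le_trans' Hog (hx _ E) (le_addr Hog _ hs)).
case E: (v y) => [s|] //= hs.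
exact: (le_trans' Hog (hy _ E) (le_addr Hog _ hs)).
Qed.

Lemma good_mul b g c y i : (forall r, v c = Some r -> le g r) ->
  good (b - g) g y i -> good b g (c * y) i.
Proof.
move=> hc hy r; rewrite (fv_mul Hv).
case Ec: (v c) => [rc|] //; case Ey: (v y) => [ry|] //= [<-].
have := le_add2 Hog (hc _ Ec) (hy _ Ey).
by rewrite addrCA subrr addr0 addrA.
Qed.

Lemma good_shift b g y i : good (b - g) g y i -> good b g y i.+1.
Proof.
move=> hy r hr; have := le_addr Hog g (hy _ hr).
by rewrite subrK mulrS (addrC g) addrA.
Qed.

Lemma good_unshift b g y i : good b g y i.+1 -> good (b - g) g y i.
Proof.
move=> hy r hr; have := hy _ hr; rewrite mulrS (addrC g) addrA => h.
apply: (@le_addr_cancel _ _ Hog _ _ g); by rewrite subrK.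
Qed.

Lemma comp_good (h : {poly K}) c g :
  (forall r, v c = Some r -> le g r) ->
  forall b, (forall i, good b g h`_i i) ->
  forall i, good b g (h \Po ('X + c%:P))`_i i.
Proof.
move=> hc; elim/poly_ind: h => [|p k IH] b hb i.
  by rewrite comp_poly0 coef0; exact: good0.
have hp : forall j, good (b - g) g p`_j j.
  move=> j; apply: good_unshift; have := hb j.+1.
  by rewrite coefD coefMX coefC /= addr0.
have IHp := IH _ hp.
rewrite comp_polyD comp_polyM comp_polyX comp_polyC mulrDr !coefD coefMX coefMC coefC.
case: i => [|j] /=.
  rewrite add0r; apply: good_add; first by rewrite mulrC; apply: good_mul.
  by have := hb 0%N; rewrite coefD coefMX coefC /= add0r.
rewrite addr0; apply: good_add; first exact: good_shift.
by rewrite mulrC; apply: good_mul.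
Qed.


Definition term a (g : L) f i := vadd (v (T a f i)) (Some (g *+ i)).

Lemma nuQE a g f : nu ('X - a%:P) = Some g ->
  nuQ le nu ('X - a%:P) f = \big[vmin le/None]_(i < size f) term a g f i.
Proof.
move=> h; rewrite /nuQ; apply: eq_bigr => i _.
by rewrite /expcoef expcoefE (pv_mul Hnu) HnuC (nu_exp _ h).
Qed.

Lemma T_big a f i : (size f <= i)%N -> T a f i = 0.
Proof.
move=> hi; rewrite /T; apply: (elimT (leq_sizeP _ _) (leqnn _)).
by rewrite size_comp_poly2 ?size_XaddC.
Qed.

Lemma lower a g f b0 : nu ('X - a%:P) = Some g -> nuQ le nu ('X - a%:P) f = Some b0 ->
  forall i, good b0 g (T a f i) i.
Proof.
move=> ha hQ i r hr; case: (ltnP i (size f)) => hi.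
  by have := bigmin_le Hog (fun i => term a g f i) hi; rewrite -nuQE // hQ /term hr.
by move: hr; rewrite T_big // v0.
Qed.

Lemma lower0 (b : K) g f : nu ('X - b%:P) = Some g -> (0 < size f)%N ->
  vle le (nuQ le nu ('X - b%:P) f) (v f.[b]).
Proof.
move=> hb hs; have := bigmin_le Hog (fun i => term b g f i) hs.
rewrite -nuQE // /term coef0_compXa mulr0n.
by case: (v f.[b]) => //= x; rewrite addr0.
Qed.

Lemma key f a (b : K) g1 g2 b0 : nu ('X - a%:P) = Some g1 -> nu ('X - b%:P) = Some g2 ->
  le g1 g2 -> ~~ le g2 g1 ->
  nuQ le nu ('X - a%:P) f = Some b0 -> nuQ le nu ('X - b%:P) f = Some b0 ->
  (0 < size f)%N -> v f.[b] = Some b0.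
Proof.
move=> ha hb h12 hn12 hQa hQb hs.
have hlow := lower ha hQa.
have hc : forall r, v (b - a) = Some r -> le g1 r.
  move=> r hr; have := pv_add Hnu ('X - a%:P) (- ('X - b%:P)).
  rewrite nu_opp ha hb.
  have -> : 'X - a%:P + - ('X - b%:P) = (b - a)%:P by rewrite polyCB; ring.
  by rewrite HnuC hr /vmin /= h12.
have hT : forall i, good b0 g1 (T b f i) i.
  move=> i; rewrite /T.
  have -> : 'X + b%:P = ('X + a%:P) \Po ('X + (b - a)%:P).
    by rewrite comp_polyD comp_polyX comp_polyC polyCB; ring.
  rewrite comp_polyA; exact: (comp_good (h := f \Po ('X + a%:P)) hc hlow).
have hge := lower0 hb hs; rewrite hQb /= in hge.
case: (eqVneq (v f.[b]) (Some b0)) => // hne; exfalso.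
suff : vlt le (Some b0) (nuQ le nu ('X - b%:P) f).
  by rewrite hQb /vlt /= (le_refl' Hog).
rewrite (nuQE _ hb); apply: (@bigmin_ind _ le (vlt le (Some b0))) => // i hi.
case: i hi => [|j] hi.
  rewrite /term coef0_compXa mulr0n.
  move: hge hne; case: (v f.[b]) => //= r hr hne.
  rewrite /vlt /= addr0 hr /=; apply/negP => hr'.
  by move/eqP: hne; apply; congr Some; apply: (og_anti Hog); rewrite hr hr'.
rewrite /term; case E: (v (T b f j.+1)) => [r|] //=.
have h1 := hT _ _ E.
have h2 : le (r + g1 *+ j.+1) (r + g2 *+ j.+1) by exact: (le_addl Hog r (le_natmul Hog j.+1 h12)).
rewrite /vlt /= (le_trans' Hog h1 h2) /=; apply/negP => h3.
have h4 := le_trans' Hog h3 h1.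
have h5 : le (g2 *+ j.+1) (g1 *+ j.+1).
  by apply: (@le_addr_cancel _ _ Hog _ _ r); rewrite ![_ + r]addrC.
have h6 : g2 *+ j.+1 = g1 *+ j.+1.
  by apply: (og_anti Hog); rewrite h5 (le_natmul Hog j.+1 h12).
by move: hn12; rewrite (natmul_inj _ h6) // (le_refl' Hog).
Qed.

Lemma key_all f a (b : K) g1 g2 : nu ('X - a%:P) = Some g1 -> nu ('X - b%:P) = Some g2 ->
  le g1 g2 -> ~~ le g2 g1 ->
  nuQ le nu ('X - a%:P) f = nu f -> nuQ le nu ('X - b%:P) f = nu f ->
  (0 < size f)%N -> v f.[b] = nu f.
Proof.
move=> ha hb h12 hn12 hQa hQb hs; case E: (nu f) hQa hQb => [b0|] hQa hQb.
  exact: (key ha hb h12 hn12 hQa hQb hs).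
by have := lower0 hb hs; rewrite hQb; case: (v f.[b]).
Qed.

End Val.

From Stdlib Require Classical_Prop.

Theorem mainTheorem17 (L : lmodType rat) (le : rel L) (K : fieldType)
    (v : K -> option L) (nu : {poly K} -> option L) (m : nat)
    (Qset : {poly K} -> Prop) (F : {poly K}) :
  ordered_group le ->
  field_valuation le v ->
  poly_valuation le nu ->
  (forall a : K, nu a%:P = v a) ->
  well_specified le v nu ->
  (1 <= m)%N ->
  (exists Q, Psi le nu m Q) ->
  (forall Q, Psi le nu m Q -> exists R, Psi le nu m R /\ vlt le (nu Q) (nu R)) ->
  (forall Q, Qset Q -> Psi le nu m Q) ->
  well_ordered_by_value le nu Qset ->
  (forall Q, Psi le nu m Q -> exists R, Qset R /\ vle le (nu Q) (nu R)) ->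
  (exists f, ~ stable le nu Qset f) ->
  limit_key le nu Qset F ->
  m = 1%N ->
  forall l : nat, (1 <= l <= (size F).-1 %/ m)%N ->
  exists Q0, Qset Q0 /\
    forall Q R, Qset Q -> Qset R -> vle le (nu Q0) (nu Q) -> vle le (nu Q0) (nu R) ->
      nu (expcoef Q F l) = nu (expcoef R F l).
Proof.
move=> Hog Hv Hnu HnuC _ _ [Q00 HQ00] Hnomax HQsub _ Hcof _ [HFm HFns HFmin] Hm1 l hl.
subst m; rewrite divn1 in hl.
have Hfin : forall Q, Psi le nu 1 Q -> exists g, nu Q = Some g.
  move=> Q /Hnomax [R [_ hR]]; move: hR; rewrite /vlt.
  by case: (nu Q) => [g|]; [exists g | case: (nu R)].
have HQform : forall Q, Qset Q -> exists a, Q = 'X - a%:P /\ exists g, nu Q = Some g.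
  move=> Q hQ; have hP := HQsub _ hQ; case: (hP) => [[hm _] hs].
  exists (- Q`_0); split; last exact: Hfin.
  apply: monic2E => //; move: hs; case: (size Q) => [|[|[|n]]] //= ->.
have [Qa hQa] : exists Q, Qset Q by case: (Hcof _ HQ00) => R [hR _]; exists R.
have sF : (0 < size F)%N by move: hl; clear; lia.
set f := F^`N(l).
have sf : (size f < size F)%N by apply: size_nderivn_lt => //; move: hl; clear; lia.
have expE : forall Q a, Q = 'X - a%:P -> nu (expcoef Q F l) = v f.[a].
  by move=> Q a ->; rewrite /expcoef expcoefE HnuC /f ev_nderivn.
case: (eqVneq f 0) => [f0|fn0].
  exists Qa; split => // Q R hQ hR _ _.
  case: (HQform _ hQ) => a [ea _]; case: (HQform _ hR) => b [eb _].
  by rewrite (expE _ _ ea) (expE _ _ eb) f0 !horner0.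
have lc0 : lead_coef f != 0 by rewrite lead_coef_eq0.
set g := (lead_coef f)^-1 *: f.
have gm : g \is monic by apply/monicP; rewrite lead_coefZ mulVf.
have sg : size g = size f by rewrite size_scale // invr_neq0.
have fg : f = lead_coef f *: g by rewrite /g scalerA divff // scale1r.
have stg : stable le nu Qset g.
  apply: Classical_Prop.NNPP => hns; have := HFmin g gm hns.
  by rewrite sg leqNgt sf.
case: stg => Q1 [hQ1 hst].
case: (Hnomax _ (HQsub _ hQ1)) => R1 [hR1 lt1].
case: (Hcof _ hR1) => Q0 [hQ0 le10].
have sg0 : (0 < size g)%N by rewrite size_poly_gt0 monic_neq0.
have main : forall P, Qset P -> vle le (nu Q0) (nu P) ->
    exists a, P = 'X - a%:P /\ v g.[a] = nu g.
  move=> P hP hle.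
  case: (HQform _ hQ1) => a1 [e1 [g1 hg1]].
  case: (HQform _ hP) => a [e [g2 hg2]].
  case: (Hfin _ hR1) => r1 hr1.
  case: (HQform _ hQ0) => a0 [_ [r0 hr0]].
  move: lt1 le10 hle; rewrite hg1 hg2 hr1 hr0 /vlt /= => /andP [h1 h2] h3 h4.
  have h12 : le g1 g2 by apply: (le_trans' Hog h1); apply: (le_trans' Hog h3 h4).
  have hn12 : ~~ le g2 g1.
    apply/negP => h5; move/negP: h2; apply.
    by apply: (le_trans' Hog h3); apply: (le_trans' Hog h4 h5).
  exists a; split => //.
  have hQ1g := hst Q1 hQ1 (vle_refl Hog _).
  have hPg : nuQ le nu P g = nu g by apply: hst => //; rewrite hg1 hg2.
  rewrite e1 in hg1 hQ1g; rewrite e in hg2 hPg.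
  exact: (key_all Hog Hv Hnu HnuC hg1 hg2 h12 hn12 hQ1g hPg sg0).
exists Q0; split => // Q R hQ hR hQ0Q hQ0R.
case: (main _ hQ hQ0Q) => a [ea va]; case: (main _ hR hQ0R) => b [eb vb].
have evalg : forall x, f.[x] = lead_coef f * g.[x] by move=> x; rewrite {1}fg hornerZ.
by rewrite (expE _ _ ea) (expE _ _ eb) !evalg !(fv_mul Hv) va vb.
Qed.
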